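(* Let $\alpha_1,\alpha_2>0$ with $\alpha_1\neq\alpha_2$. Then $x=\tfrac12$ is the unique solution in $(0,1)$ of $F_{\alpha_1}(x)=F_{\alpha_2}(x)$.
   Context: For $\alpha>0$, $F_\alpha(t)=\int_0^t\frac{[x(1-x)]^{\alpha-1}}{B(\alpha,\alpha)}dx$ is the distribution function of the symmetric Beta$(\alpha,\alpha)$ law, $B$ being the Beta function. *)

(* Defs.v *)
From Stdlib Require Import Reals.
From Coquelicot Require Import Coquelicot.
Open Scope R_scope.

Definition beta_kernel (alpha x : R) : R := Rpower (x * (1 - x)) (alpha - 1).

(* Beta function B(alpha,alpha) = int_0^1 [x(1-x)]^(alpha-1) dx
   (improper at both endpoints when alpha < 1). *)
Definition Beta_sym (alpha : R) : R :=
  RInt_gen (beta_kernel alpha) (at_right 0) (at_left 1).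

Definition F (alpha t : R) : R :=
  RInt_gen (fun x => beta_kernel alpha x / Beta_sym alpha) (at_right 0) (at_point t).

(* Main.v *)
Require Import Defs.
From Stdlib Require Import Reals Lra Classical.
From Coquelicot Require Import Coquelicot.
Open Scope R_scope.

Lemma Rpower_cont (c x : R) : 0 < x -> continuous (fun y => Rpower y c) x.
Proof.
  intros Hx. apply (ex_derive_continuous (fun y => Rpower y c)).
  exists (c * Rpower x (c - 1)). apply is_derive_Reals. now apply derivable_pt_lim_power.
Qed.

Lemma Rpower_pos' (x c : R) : 0 < Rpower x c.
Proof. unfold Rpower. apply exp_pos. Qed.

Lemma Rpower_le_neg (a b c : R) : 0 < a -> a <= b -> c <= 0 -> Rpower b c <= Rpower a c.
Proof.
  intros Ha Hab Hc. unfold Rpower.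
  assert (ln a <= ln b) by (apply ln_le; lra).
  assert (c * ln b <= c * ln a) by nra.
  destruct (Rle_lt_or_eq_dec _ _ H0) as [H1|H1].
  - left. now apply exp_increasing.
  - rewrite H1. lra.
Qed.

Lemma kpos a x : 0 < beta_kernel a x.
Proof. apply Rpower_pos'. Qed.

Lemma kcont a x : 0 < x < 1 -> continuous (beta_kernel a) x.
Proof.
  intros Hx. unfold beta_kernel.
  apply (continuous_comp (fun x => x * (1 - x)) (fun y => Rpower y (a - 1))).
  - apply (ex_derive_continuous (fun x => x * (1 - x))). auto_derive. auto.
  - apply Rpower_cont. nra.
Qed.

Lemma ksym a x : beta_kernel a (1 - x) = beta_kernel a x.
Proof. unfold beta_kernel. f_equal. ring. Qed.

Lemma kex a s t : 0 < s < 1 -> 0 < t < 1 -> ex_RInt (beta_kernel a) s t.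
Proof.
  intros Hs Ht. apply (ex_RInt_continuous (V:=R_CompleteNormedModule)). intros z Hz. apply kcont.
  split.
  - apply Rlt_le_trans with (Rmin s t); [|lra]. apply Rmin_case; lra.
  - apply Rle_lt_trans with (Rmax s t); [lra|]. apply Rmax_case; lra.
Qed.

Definition I a s := RInt (beta_kernel a) s (1/2).

Lemma Ichasles a s t : 0 < s < 1 -> 0 < t < 1 -> I a s = RInt (beta_kernel a) s t + I a t.
Proof.
  intros Hs Ht. unfold I. rewrite <- (RInt_Chasles (V:=R_CompleteNormedModule) _ s t (1/2)).
  - reflexivity.
  - now apply kex.
  - apply kex; lra.
Qed.

Lemma RInt_k_pos a s t : 0 < s < t -> t < 1 -> 0 < RInt (beta_kernel a) s t.
Proof.
  intros Hs Ht.
  assert (H : RInt (fun _ => 0) s t < RInt (beta_kernel a) s t).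
  { apply (RInt_lt (fun _ => 0) (beta_kernel a)); try lra.
    - intros x Hx. apply kcont. lra.
    - intros x Hx. apply continuous_const.
    - intros x Hx. apply kpos. }
  rewrite RInt_const in H. unfold scal in H; simpl in H. unfold mult in H; simpl in H. lra.
Qed.

Lemma Imono a s t : 0 < s <= t -> t <= 1/2 -> I a t <= I a s.
Proof.
  intros Hs Ht. rewrite (Ichasles a s t) by lra.
  destruct (Rle_lt_or_eq_dec _ _ (proj2 Hs)) as [H|H].
  - pose proof (RInt_k_pos a s t). lra.
  - subst. rewrite RInt_point. simpl. unfold zero; simpl. lra.
Qed.

Lemma kbound a y : 0 < y <= 1/2 ->
  beta_kernel a y <= (1 + Rpower (/2) (a-1)) * Rpower y (a-1).
Proof.
  intros Hy. unfold beta_kernel.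
  pose proof (Rpower_pos' (/2) (a-1)). pose proof (Rpower_pos' y (a-1)).
  destruct (Rle_or_lt 0 (a-1)) as [Ha|Ha].
  - assert (Rpower (y * (1 - y)) (a - 1) <= Rpower y (a-1)).
    { apply Rle_Rpower_l; auto. nra. }
    assert (0 <= Rpower (/2) (a-1) * Rpower y (a-1)) by (apply Rmult_le_pos; lra).
    lra.
  - assert (Rpower (y * (1 - y)) (a - 1) <= Rpower (y * /2) (a-1)).
    { apply Rpower_le_neg; nra. }
    rewrite <- (Rpower_mult_distr y (/2)) in H1 by lra.
    assert (Rpower y (a - 1) * Rpower (/ 2) (a - 1) <= (1 + Rpower (/ 2) (a - 1)) * Rpower y (a - 1)) by nra.
    lra.
Qed.

Lemma Ibound a : 0 < a -> exists M, forall s, 0 < s <= 1/2 -> I a s <= M.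
Proof.
  intros Ha. set (C := 1 + Rpower (/2) (a-1)).
  exists (C / a * Rpower (1/2) a). intros s Hs.
  assert (HG : is_RInt (fun y => C * Rpower y (a-1)) s (1/2)
     (minus (C / a * Rpower (1/2) a) (C / a * Rpower s a))).
  { apply (is_RInt_derive (fun y => C / a * Rpower y a)).
    - intros x Hx. rewrite Rmin_left in Hx by lra.
      apply is_derive_Reals.
      replace (C * Rpower x (a-1)) with (C / a * (a * Rpower x (a - 1))) by (field; lra).
      apply derivable_pt_lim_scal. apply derivable_pt_lim_power. lra.
    - intros x Hx. rewrite Rmin_left in Hx by lra.
      apply (continuous_mult (fun _ => C) (fun y => Rpower y (a-1))).
      + apply continuous_const.
      + apply Rpower_cont. lra. }
  unfold I. apply Rle_trans with (RInt (fun y => C * Rpower y (a-1)) s (1/2)).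
  - apply RInt_le; try lra.
    + apply kex; lra.
    + eexists; eauto.
    + intros x Hx. apply kbound. lra.
  - rewrite (is_RInt_unique _ _ _ _ HG). unfold minus, plus, opp; simpl.
    pose proof (Rpower_pos' s a). assert (0 < C / a).
    { unfold C. pose proof (Rpower_pos' (/2) (a-1)). apply Rdiv_lt_0_compat; lra. }
    nra.
Qed.

Lemma Isym a s : 0 < s < 1 -> RInt (beta_kernel a) (1/2) (1 - s) = I a s.
Proof.
  intros Hs. unfold I.
  assert (E := RInt_comp_lin (V:=R_CompleteNormedModule) (beta_kernel a) (-1) 1 (1/2) s).
  replace (-1 * s + 1) with (1 - s) in E by ring.
  replace (-1 * (1/2) + 1) with (1/2) in E by field.
  rewrite <- E by (apply kex; lra).
  assert (Hg : ex_RInt (fun y => beta_kernel a (-1 * y + 1)) (1/2) s).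
  { apply (ex_RInt_continuous (V:=R_CompleteNormedModule)). intros z Hz.
    apply (continuous_comp (fun y => -1 * y + 1) (beta_kernel a)).
    + apply (ex_derive_continuous (fun y => -1 * y + 1)). auto_derive. auto.
    + apply kcont. split.
      * apply Rlt_le_trans with (-1 * Rmax (1/2) s + 1). apply Rmax_case; lra. lra.
      * apply Rle_lt_trans with (-1 * Rmin (1/2) s + 1). lra. apply Rmin_case; lra. }
  rewrite (RInt_scal (V:=R_CompleteNormedModule)) by exact Hg.
  transitivity (opp (RInt (fun y => beta_kernel a (-1 * y + 1)) (1/2) s)).
  { unfold scal, opp; simpl. unfold mult; simpl. ring. }
  rewrite (opp_RInt_swap (V:=R_CompleteNormedModule)) by exact Hg.
  apply RInt_ext. intros x _.
  replace (-1 * x + 1) with (1 - x) by ring. apply ksym.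
Qed.

Lemma ballR (x e y : R) : ball x e y <-> Rabs (y - x) < e.
Proof. unfold ball; simpl. unfold AbsRing_ball, abs, minus, plus, opp; simpl. tauto. Qed.

Lemma ballR1 (x e y : R) : ball x e y -> x - e < y < x + e.
Proof. intros H. unfold ball in H; simpl in H. unfold AbsRing_ball, abs, minus, plus, opp in H; simpl in H. apply Rabs_def2 in H. lra. Qed.

Lemma ballR2 (x e y : R) : x - e < y < x + e -> ball x e y.
Proof. intros H. unfold ball; simpl. unfold AbsRing_ball, abs, minus, plus, opp; simpl. apply Rabs_def1; lra. Qed.

Lemma Ilim a : 0 < a -> exists L, 0 < L /\ (forall s, 0 < s <= 1/2 -> I a s <= L) /\
  (forall eps, 0 < eps -> exists d, 0 < d <= 1/2 /\ forall s, 0 < s < d -> L - eps < I a s).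
Proof.
  intros Ha. destruct (Ibound a Ha) as [M HM].
  set (E := fun v => exists s, 0 < s <= 1/2 /\ v = I a s).
  assert (Hb : bound E).
  { exists M. intros v [s [Hs ->]]. now apply HM. }
  assert (Hne : exists v, E v).
  { exists (I a (1/2)). exists (1/2). split; [lra|reflexivity]. }
  destruct (completeness E Hb Hne) as [m [Hub Hlub]].
  exists m. split; [|split].
  - apply Rlt_le_trans with (I a (1/4)).
    + unfold I. apply RInt_k_pos; lra.
    + apply Hub. exists (1/4). split; [lra|reflexivity].
  - intros s Hs. apply Hub. exists s. split; [lra|reflexivity].
  - intros eps Heps.
    destruct (classic (exists s, 0 < s <= 1/2 /\ m - eps < I a s)) as [[s [Hs Hlt]]|Hn].
    + exists s. split; [lra|]. intros t Ht.
      pose proof (Imono a t s ltac:(lra) ltac:(lra)). lra.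
    + exfalso. assert (m <= m - eps); [|lra].
      apply Hlub. intros v [s [Hs ->]].
      destruct (Rle_or_lt (I a s) (m - eps)) as [H|H]; auto.
      exfalso. apply Hn. exists s. auto.
Qed.

Lemma gen0 a L : (forall s, 0 < s <= 1/2 -> I a s <= L) ->
  (forall eps, 0 < eps -> exists d, 0 < d <= 1/2 /\ forall s, 0 < s < d -> L - eps < I a s) ->
  is_RInt_gen (beta_kernel a) (at_right 0) (at_point (1/2)) L.
Proof.
  intros H1 H2.
  refine (filterlimi_lim_ext_loc (fun ab => RInt (beta_kernel a) (fst ab) (snd ab)) _ _ _).
  - apply (Filter_prod _ _ _ (fun s => 0 < s < 1/2) (fun b => b = 1/2)).
   
    + exists (mkposreal (1/2) ltac:(lra)). intros y Hy Hp. apply ballR1 in Hy. simpl in Hy.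
      lra.
    + reflexivity.
    + intros x y Hx Hy. simpl. subst. apply (RInt_correct (V:=R_CompleteNormedModule)). apply kex; lra.
  - apply filterlim_locally. intros eps.
    destruct (H2 eps (cond_pos eps)) as [d [Hd Hs]].
    apply (Filter_prod _ _ _ (fun s => 0 < s < d) (fun b => b = 1/2)).
   
    + exists (mkposreal d ltac:(lra)). intros y Hy Hp. apply ballR1 in Hy. simpl in Hy.
      lra.
    + reflexivity.
    + intros x y Hx Hy. simpl. subst. apply ballR2.
      pose proof (Hs x Hx). pose proof (H1 x ltac:(lra)). unfold I in *.
      lra.
Qed.

Lemma gen1 a L : (forall s, 0 < s <= 1/2 -> I a s <= L) ->
  (forall eps, 0 < eps -> exists d, 0 < d <= 1/2 /\ forall s, 0 < s < d -> L - eps < I a s) ->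
  is_RInt_gen (beta_kernel a) (at_point (1/2)) (at_left 1) L.
Proof.
  intros H1 H2.
  refine (filterlimi_lim_ext_loc (fun ab => RInt (beta_kernel a) (fst ab) (snd ab)) _ _ _).
  - apply (Filter_prod _ _ _ (fun b => b = 1/2) (fun s => 1/2 < s < 1)).
   
    + reflexivity.
    + exists (mkposreal (1/2) ltac:(lra)). intros y Hy Hp. apply ballR1 in Hy. simpl in Hy.
      lra.
    + intros x y Hx Hy. simpl. subst. apply (RInt_correct (V:=R_CompleteNormedModule)). apply kex; lra.
  - apply filterlim_locally. intros eps.
    destruct (H2 eps (cond_pos eps)) as [d [Hd Hs]].
    apply (Filter_prod _ _ _ (fun b => b = 1/2) (fun s => 1 - d < s < 1)).
   
    + reflexivity.
    + exists (mkposreal d ltac:(lra)). intros y Hy Hp. apply ballR1 in Hy. simpl in Hy.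
      lra.
    + intros x y Hx Hy. simpl. subst. apply ballR2.
      replace y with (1 - (1 - y)) by ring. rewrite Isym by lra.
      pose proof (Hs (1 - y) ltac:(lra)). pose proof (H1 (1 - y) ltac:(lra)).
      lra.
Qed.

Lemma FL a : 0 < a -> exists L, 0 < L /\ (forall s, 0 < s <= 1/2 -> I a s <= L) /\
  (forall eps, 0 < eps -> exists d, 0 < d <= 1/2 /\ forall s, 0 < s < d -> L - eps < I a s) /\
  forall t, 0 < t < 1 -> F a t = 1/2 + RInt (beta_kernel a) (1/2) t / (2 * L).
Proof.
  intros Ha. destruct (Ilim a Ha) as [L [HL [H1 H2]]].
  exists L. split; [auto|split; [auto|split; [auto|]]].
  assert (HB : Beta_sym a = 2 * L).
  { unfold Beta_sym.
    assert (G := is_RInt_gen_Chasles (beta_kernel a) (1/2) L L (gen0 a L H1 H2) (gen1 a L H1 H2)).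
    rewrite (is_RInt_gen_unique _ _ G). unfold plus; simpl. ring. }
  intros t Ht. unfold F.
  assert (G0 : is_RInt (beta_kernel a) (1/2) t (RInt (beta_kernel a) (1/2) t)).
  { apply (RInt_correct (V:=R_CompleteNormedModule)). apply kex; lra. }
  apply (proj2 (is_RInt_gen_at_point _ _ _ _)) in G0.
  assert (G := is_RInt_gen_Chasles (beta_kernel a) (1/2) L _ (gen0 a L H1 H2) G0).
  apply (is_RInt_gen_scal _ (/ (2 * L))) in G.
  apply (is_RInt_gen_ext _ (fun x => beta_kernel a x / Beta_sym a)) in G.
  - rewrite (is_RInt_gen_unique _ _ G). unfold scal, plus; simpl. unfold mult; simpl.
    field. lra.
  - apply filter_forall. intros [u v] x _. rewrite HB. unfold scal; simpl. unfold mult; simpl.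
    field. lra.
Qed.

Lemma RInt_scal_k a c s t : 0 < s < 1 -> 0 < t < 1 ->
  RInt (fun z => c * beta_kernel a z) s t = c * RInt (beta_kernel a) s t.
Proof.
  intros Hs Ht. exact (RInt_scal (V:=R_CompleteNormedModule) (beta_kernel a) s t c (kex a s t Hs Ht)).
Qed.

Lemma cont_scal_k a c x : 0 < x < 1 -> continuous (fun z => c * beta_kernel a z) x.
Proof.
  intros Hx. apply (continuous_mult (fun _ => c) (beta_kernel a)).
  apply continuous_const. now apply kcont.
Qed.

Lemma key a1 a2 L1 L2 : 0 < a1 < a2 -> 0 < L1 -> 0 < L2 ->
  (forall s, 0 < s <= 1/2 -> I a1 s <= L1) ->
  (forall eps, 0 < eps -> exists d, 0 < d <= 1/2 /\ forall s, 0 < s < d -> L2 - eps < I a2 s) ->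
  forall y, 0 < y < 1/2 -> / L1 * I a1 y < / L2 * I a2 y.
Proof.
  intros Ha HL1 HL2 P1 P2 y Hy.
  set (phi := fun z => Rpower (z * (1 - z)) (a2 - a1)).
  assert (Hk : forall z, beta_kernel a2 z = beta_kernel a1 z * phi z).
  { intros z. unfold beta_kernel, phi. rewrite <- Rpower_plus. f_equal. ring. }
  assert (Hphi : forall z w, 0 < z < w -> w <= 1/2 -> phi z < phi w).
  { intros z w Hz Hw. unfold phi. apply Rlt_Rpower_l; [lra|]. split; nra. }
  assert (HiL1 : 0 < / L1) by (apply Rinv_0_lt_compat; lra).
  assert (HiL2 : 0 < / L2) by (apply Rinv_0_lt_compat; lra).
  destruct (Rle_or_lt (phi y) (L2 / L1)) as [Hc|Hc].
  -
    assert (Hpt : forall z, 0 < z < y -> / L2 * beta_kernel a2 z < / L1 * beta_kernel a1 z).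
    { intros z Hz. pose proof (Hphi z y ltac:(lra) ltac:(lra)).
      rewrite Hk. pose proof (kpos a1 z).
      assert (phi z < L2 / L1) by lra.
      assert (/ L2 * phi z < / L1).
      { apply Rmult_lt_reg_l with L2; [lra|].
        replace (L2 * / L1) with (L2 / L1) by (unfold Rdiv; ring).
        replace (L2 * (/ L2 * phi z)) with (phi z) by (field; lra). lra. }
      nra. }
    set (D := fun s => / L1 * I a1 s - / L2 * I a2 s).
    assert (HD : forall s t, 0 < s < t -> t <= y -> D t < D s).
    { intros s t Hs Ht. unfold D.
      rewrite (Ichasles a1 s t) by lra. rewrite (Ichasles a2 s t) by lra.
      assert (RInt (fun z => / L2 * beta_kernel a2 z) s t < RInt (fun z => / L1 * beta_kernel a1 z) s t).
      { apply RInt_lt; try lra.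
        - intros x Hx. apply cont_scal_k. lra.
        - intros x Hx. apply cont_scal_k. lra.
        - intros x Hx. apply Hpt. lra. }
      rewrite !RInt_scal_k in H by lra. lra. }
    assert (Hneg : D (y / 2) <= 0).
    { destruct (Rle_or_lt (D (y/2)) 0) as [h|h]; auto. exfalso.
      destruct (P2 (D (y/2) * L2 / 2)) as [d [Hd Hds]].
      { assert (0 < D (y/2) * L2) by nra. lra. }
      set (s := Rmin d (y/2) / 2).
      assert (Hs : 0 < s < Rmin d (y/2)).
      { unfold s. assert (0 < Rmin d (y/2)) by (apply Rmin_case; lra). lra. }
      assert (Hsd : s < d) by (pose proof (Rmin_l d (y/2)); lra).
      assert (Hsy : s < y/2) by (pose proof (Rmin_r d (y/2)); lra).
      pose proof (HD s (y/2) ltac:(lra) ltac:(lra)).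
      pose proof (Hds s ltac:(lra)). pose proof (P1 s ltac:(lra)).
      assert (Ds : D s = / L1 * I a1 s - / L2 * I a2 s) by reflexivity.
      assert (/ L1 * I a1 s <= 1).
      { replace 1 with (/ L1 * L1) by (field; lra). apply Rmult_le_compat_l; lra. }
      assert (1 - D (y / 2) / 2 < / L2 * I a2 s).
      { replace (1 - D (y / 2) / 2) with (/ L2 * (L2 - D (y / 2) * L2 / 2)) by (field; lra).
        apply Rmult_lt_compat_l; lra. }
      lra. }
    pose proof (HD (y/2) y ltac:(lra) ltac:(lra)). unfold D in *. lra.
  -
    assert (Hpt : forall z, y < z < 1/2 -> / L1 * beta_kernel a1 z < / L2 * beta_kernel a2 z).
    { intros z Hz. pose proof (Hphi y z ltac:(lra) ltac:(lra)).
      rewrite Hk. pose proof (kpos a1 z).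
      assert (L2 / L1 < phi z) by lra.
      assert (/ L1 < / L2 * phi z).
      { apply Rmult_lt_reg_l with L2; [lra|].
        replace (L2 * / L1) with (L2 / L1) by (unfold Rdiv; ring).
        replace (L2 * (/ L2 * phi z)) with (phi z) by (field; lra). lra. }
      nra. }
    assert (RInt (fun z => / L1 * beta_kernel a1 z) y (1/2) < RInt (fun z => / L2 * beta_kernel a2 z) y (1/2)).
    { apply RInt_lt; try lra.
      - intros x Hx. apply cont_scal_k. lra.
      - intros x Hx. apply cont_scal_k. lra.
      - intros x Hx. apply Hpt. lra. }
    rewrite !RInt_scal_k in H by lra. unfold I. lra.
Qed.

Theorem proposition3 (a1 a2 : R) (h1 : 0 < a1) (h2 : 0 < a2) (hne : a1 <> a2) :
  0 < 1/2 < 1 /\ F a1 (1/2) = F a2 (1/2) /\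
  (forall x : R, 0 < x < 1 -> F a1 x = F a2 x -> x = 1/2).
Proof.
  destruct (FL a1 h1) as [L1 [HL1 [P11 [P12 HF1]]]].
  destruct (FL a2 h2) as [L2 [HL2 [P21 [P22 HF2]]]].
  assert (Hne : forall y, 0 < y < 1/2 -> / L1 * I a1 y <> / L2 * I a2 y).
  { intros y Hy. destruct (Rlt_or_le a1 a2) as [H|H].
    - pose proof (key a1 a2 L1 L2 ltac:(lra) HL1 HL2 P11 P22 y Hy). lra.
    - assert (a2 < a1) by (destruct H; [auto|congruence]).
      pose proof (key a2 a1 L2 L1 ltac:(lra) HL2 HL1 P21 P12 y Hy). lra. }
  split; [lra|split].
  - rewrite (HF1 (1/2)), (HF2 (1/2)) by lra. rewrite !RInt_point. unfold zero; simpl.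
    field; lra.
  - intros x Hx Heq. rewrite (HF1 x Hx), (HF2 x Hx) in Heq.
    assert (Heq' : / L1 * RInt (beta_kernel a1) (1/2) x = / L2 * RInt (beta_kernel a2) (1/2) x).
    { apply Rmult_eq_reg_l with (/2); [|lra].
      replace (/ 2 * (/ L1 * RInt (beta_kernel a1) (1 / 2) x)) with (RInt (beta_kernel a1) (1 / 2) x / (2 * L1)) by (field; lra).
      replace (/ 2 * (/ L2 * RInt (beta_kernel a2) (1 / 2) x)) with (RInt (beta_kernel a2) (1 / 2) x / (2 * L2)) by (field; lra).
      lra. }
    destruct (Rtotal_order x (1/2)) as [Hl|[He|Hg]]; auto; exfalso.
    + rewrite <- (opp_RInt_swap (V:=R_CompleteNormedModule) (beta_kernel a1)) in Heq' by (apply kex; lra).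
      rewrite <- (opp_RInt_swap (V:=R_CompleteNormedModule) (beta_kernel a2)) in Heq' by (apply kex; lra).
      unfold opp in Heq'; simpl in Heq'.
      apply (Hne x ltac:(lra)). unfold I. lra.
    + replace x with (1 - (1 - x)) in Heq' by ring.
      rewrite !Isym in Heq' by lra.
      apply (Hne (1 - x) ltac:(lra)). exact Heq'.
Qed.
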